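(* Let $S$ be a numerical semigroup minimally generated by $n_1<\cdots<n_e$, with conductor $c$, and let $m\ge 2c-1$. Let $M$ and $N$ be $(S,m,r)$-amenable sets with shadows $L_M$ and $L_N$ respectively. If $L_M\subseteq L_N$, then $\sharp\mathrm D(M)\le\sharp\mathrm D(N)$.
   Context: A numerical semigroup is a submonoid of $\mathbb N$ with finite complement; its conductor $c$ is the least element of $S$ such that $c+n\in S$ for all $n\in\mathbb N$. For $x\in S$, $\mathrm D(x)=\{\alpha\in S\mid x-\alpha\in S\}$ and for $A\subseteq S$, $\mathrm D(A)=\bigcup_{x\in A}\mathrm D(x)$. A set $M=\{m_1<\cdots<m_r\}\subseteq S$ with $2c-1\le m=m_1$ is $(S,m,r)$-amenable if $\mathrm D(m_i)\cap[m,\infty)\subseteq M$ for all $i$. The ground is $\{m,\ldots,m+n_e-1\}$ and the shadow of an amenable set $M$ is $M\cap\{m,\ldots,m+n_e-1\}$. *)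

(* Defs.v *)
From mathcomp Require Import all_boot.
Set Implicit Arguments. Unset Strict Implicit. Unset Printing Implicit Defensive.

Definition submonoid (S : pred nat) : Prop :=
  S 0 /\ (forall x y, S x -> S y -> S (x + y)).

Definition numerical_semigroup (S : pred nat) : Prop :=
  submonoid S /\ exists N, forall n, N <= n -> S n.

Inductive gen_by (g : seq nat) : nat -> Prop :=
| gen_by0 : gen_by g 0
| gen_byS a x : a \in g -> gen_by g x -> gen_by g (a + x).

Definition generates (S : pred nat) (g : seq nat) : Prop :=
  forall x, S x <-> gen_by g x.

(* S is minimally generated by n_1 < ... < n_e, listed increasingly in g:
   g generates S and no proper sub-family of g generates S
   (it suffices that no single generator can be dropped). *)
Definition minimally_generated (S : pred nat) (g : seq nat) : Prop :=
  sorted ltn g /\ generates S g /\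
  (forall a, a \in g -> ~ generates S (rem a g)).

Definition is_conductor (S : pred nat) (c : nat) : Prop :=
  S c /\ (forall n, S (c + n)) /\
  (forall c', S c' -> (forall n, S (c' + n)) -> c <= c').

Definition Dx (S : pred nat) (x a : nat) : bool := S a && (a <= x) && S (x - a).

(* D(A) for a finite A (given as a seq), listed without repetition *)
Definition DA (S : pred nat) (A : seq nat) : seq nat :=
  [seq a <- iota 0 (\max_(x <- A) x).+1 | has (fun x => Dx S x a) A].

Definition amenable (S : pred nat) (c m r : nat) (M : seq nat) : Prop :=
  sorted ltn M /\ size M = r /\ all S M /\ 0 < r /\ head 0 M = m /\
  2 * c - 1 <= m /\
  (forall x a, x \in M -> Dx S x a -> m <= a -> a \in M).

Definition shadow (m ne : nat) (M : seq nat) : seq nat :=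
  [seq x <- M | (m <= x) && (x < m + ne)].

(* Main.v *)
Require Import Defs.
From mathcomp Require Import all_boot.
From mathcomp Require Import zify.
Set Implicit Arguments. Unset Strict Implicit.

Lemma gen_pos (S : pred nat) g y : generates S g -> gen_by g y -> 0 < y ->
  exists n, [/\ n \in g, 0 < n, n <= y & S (y - n)].
Proof.
move=> hg; elim=> [//|a x ag gx IH] hy.
case: (posnP a) => [a0|apos].
  subst a; apply: IH; by [].
exists a; split=> //; first lia.
by rewrite addKn; apply/hg.
Qed.

Lemma sorted_le_last (g : seq nat) n : sorted ltn g -> n \in g -> n <= last 0 g.
Proof.
elim: g => [//|x s IH] /= hp; rewrite inE => /orP [/eqP->|hn].
  case: s hp {IH} => [//|y s] /= hp.
  have: all (ltn x) (y :: s) by apply: (order_path_min ltn_trans).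
  move=> /allP /(_ (last y s) (mem_last y s)) /=; lia.
case: s hp IH hn => [//|y s] /= /andP [_ hp] IH hn.
exact: IH.
Qed.

Lemma amen_ge S c m r M x : amenable S c m r M -> x \in M -> m <= x.
Proof.
case=> hs [hsz [_ [hr [hh _]]]].
case: M hs hsz hh => [|y s] /=; first by move=> _ hsz; rewrite -hsz in hr.
move=> hp _ <- ; rewrite inE => /orP [/eqP->//|hx].
have: all (ltn y) s by apply: (order_path_min ltn_trans).
by move=> /allP /(_ x hx) /ltnW.
Qed.

Lemma key S g c m r M : submonoid S -> generates S g -> sorted ltn g ->
  amenable S c m r M ->
  forall x a, x \in M -> a < m -> Dx S x a ->
  exists y, [/\ y \in M, y < m + last 0 g & Dx S y a].
Proof.
move=> [S0 SD] hg hgs hM.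
have hMa := hM; case: hMa => _ [_ [_ [_ [_ [_ hcl]]]]].
elim/ltn_ind=> x IH a xM am hD.
have mx := amen_ge hM xM.
case: (ltnP x (m + last 0 g)) => hx; first by exists x.
move: hD; rewrite /Dx => /andP [/andP [Sa ax] Sxa].
have [n [ng npos nle Sr]] := gen_pos hg ((hg _).1 Sxa) (ltac:(lia) : 0 < x - a).
have nl := sorted_le_last hgs ng.
have Sn : S n by apply/hg; rewrite -[n]addn0; apply: gen_byS => //; exact: gen_by0.
have ex : x - n = a + (x - a - n) by lia.
have Sx' : S (x - n) by rewrite ex; apply: SD.
have x'M : x - n \in M.
  apply: (hcl x) => //; last lia.
  by rewrite /Dx Sx' leq_subr /= (_ : x - (x - n) = n) //; lia.
apply: (IH (x - n)) => //; first lia.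
rewrite /Dx Sa /=; apply/andP; split; first lia.
by rewrite (_ : x - n - a = x - a - n) //; lia.
Qed.

Lemma count_split (P : pred nat) m s :
  count P s = count (fun a => P a && (a < m)) s + count (fun a => P a && (m <= a)) s.
Proof.
elim: s => //= x s ->; case: (P x) => /=; case: (ltnP x m) => /=; lia.
Qed.

Lemma count_iota_ext (P : pred nat) K j : (forall a, P a -> a < K) ->
  count P (iota 0 K) = count P (iota 0 (K + j)).
Proof.
move=> hP; rewrite iotaD count_cat add0n.
have -> : count P (iota K j) = 0.
  apply/eqP; rewrite -leqn0 leqNgt -has_count; apply/hasP => -[a].
  rewrite mem_iota => /andP [ha _] /hP; lia.
by rewrite addn0.
Qed.

Lemma DA_count S M : forall K, \max_(x <- M) x < K ->
  size (DA S M) = count (fun a => has (fun x => Dx S x a) M) (iota 0 K).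
Proof.
move=> K hK; rewrite /DA size_filter.
rewrite -(subnKC hK) -count_iota_ext //.
move=> a /hasP [x xM]; rewrite /Dx => /andP [/andP [_ ax] _].
have := @leq_bigmax_seq _ M predT (fun y => y) x xM isT; simpl; lia.
Qed.

Lemma count_mem_iota (M : seq nat) K : uniq M -> (forall a, a \in M -> a < K) ->
  count (mem M) (iota 0 K) = size M.
Proof.
move=> uM hM; rewrite -size_filter; apply: perm_size; apply: uniq_perm => //.
- by rewrite filter_uniq // iota_uniq.
move=> a; rewrite mem_filter mem_iota /= add0n; apply/idP/idP => [/andP [] //|aM].
by rewrite aM hM.
Qed.

Lemma upper_count S c m r M K : submonoid S -> amenable S c m r M ->
  \max_(x <- M) x < K ->
  count (fun a => has (fun x => Dx S x a) M && (m <= a)) (iota 0 K) = r.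
Proof.
move=> [S0 _] hM hK.
have hMa := hM; case: hMa => hs [hsz [hSM [_ [_ [_ hcl]]]]].
rewrite (eq_count (a2 := mem M)); last first.
  move=> a /=; apply/idP/idP.
    by move=> /andP [/hasP [x xM hD] ma]; apply: hcl hD ma.
  move=> aM; rewrite (amen_ge hM aM) andbT; apply/hasP; exists a => //.
  by rewrite /Dx (allP hSM a aM) leqnn subnn S0.
rewrite -hsz; apply: count_mem_iota.
  exact: (sorted_uniq ltn_trans ltnn hs).
move=> a aM; have h := @leq_bigmax_seq _ M predT (fun y => y) a aM isT.
exact: leq_ltn_trans h hK.
Qed.

Theorem corollary3p11 (S : pred nat) (g : seq nat) (c m r : nat)
    (M N : seq nat) :
  numerical_semigroup S ->
  minimally_generated S g ->
  is_conductor S c ->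
  2 * c - 1 <= m ->
  amenable S c m r M ->
  amenable S c m r N ->
  {subset shadow m (last 0 g) M <= shadow m (last 0 g) N} ->
  size (DA S M) <= size (DA S N).
Proof.
move=> [hsm _] [hgs [hg _]] _ _ hM hN hsub.
set K := (\max_(x <- M) x + \max_(x <- N) x).+1.
have hKM : \max_(x <- M) x < K by rewrite /K ltnS leq_addr.
have hKN : \max_(x <- N) x < K by rewrite /K ltnS leq_addl.
rewrite (DA_count S hKM) (DA_count S hKN) [X in X <= _](count_split _ m) [X in _ <= X](count_split _ m).
rewrite (upper_count hsm hM hKM) (upper_count hsm hN hKN) leq_add2r.
apply: sub_count => a /= /andP [/hasP [x xM hD] am]; rewrite am andbT.
have [y [yM yl hy]] := key hsm hg hgs hM xM am hD.
have ys : y \in shadow m (last 0 g) M by rewrite mem_filter yM yl (amen_ge hM yM).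
move: (hsub y ys); rewrite mem_filter => /andP [_ yN].
by apply/hasP; exists y.
Qed.
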